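(* Suppose $\ell'$ is $\beta$-Lipschitz and $|\ell'|\le G$ on $\mathbb{R}$. Let $R\ge1$ and $\beta(R):=2L^2R^{2L-2}(\beta+G)$. Then $\mathcal{R}$ is $\beta(R)$-smooth on $B(R)$: for all $W,V\in B(R)$, $\|\nabla\mathcal{R}(W)-\nabla\mathcal{R}(V)\|\le\beta(R)\|W-V\|$.
   Context: Given $z_1,\dots,z_n\in\mathbb{R}^d$ with $\|z_i\|\le1$. A depth-$L$ linear network is $W=(W_L,\dots,W_1)$ with $W_k\in\mathbb{R}^{d_k\times d_{k-1}}$, $d_0=d$, $d_L=1$, $w_{\mathrm{prod}}:=(W_L\cdots W_1)^\top$, and $\mathcal{R}(W)=\frac1n\sum_{i=1}^n\ell(\langle w_{\mathrm{prod}},z_i\rangle)$. $\|W\|$ denotes the Euclidean norm of all entries of $W$ jointly, and $\|\cdot\|_F$ the Frobenius norm. $B(R):=\{W:\|W_k\|_F\le R\text{ for all }1\le k\le L\}$. *)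

(* Defs.v *)
From Stdlib Require Import Reals Lra Lia Arith.
Open Scope R_scope.

Fixpoint rsum (n : nat) (f : nat -> R) : R :=
  match n with O => 0 | S m => rsum m f + f m end.

(* Parameters of a depth-L linear network: W k i j is entry (i,j) of layer W_k,
   meaningful for 1 <= k <= L, i < dims k, j < dims (k-1). *)
Definition params := nat -> nat -> nat -> R.

(* P k = W_k ... W_1 (a dims k x dims 0 matrix), P 0 = identity. *)
Fixpoint prodmat (dims : nat -> nat) (W : params) (k : nat) : nat -> nat -> R :=
  match k with
  | O => fun i j => if Nat.eqb i j then 1 else 0
  | S k' => fun i j => rsum (dims k') (fun m => W (S k') i m * prodmat dims W k' m j)
  end.

(* w_prod = (W_L ... W_1)^T, a vector in R^d (d_L = 1, so row 0). *)
Definition wprod (dims : nat -> nat) (L : nat) (W : params) : nat -> R :=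
  fun j => prodmat dims W L 0%nat j.

Definition inner (d : nat) (u v : nat -> R) : R := rsum d (fun j => u j * v j).

Definition risk (ell : R -> R) (n d L : nat) (dims : nat -> nat)
  (z : nat -> nat -> R) (W : params) : R :=
  / INR n * rsum n (fun i => ell (inner d (wprod dims L W) (z i))).

Definition frob (dims : nat -> nat) (W : params) (k : nat) : R :=
  sqrt (rsum (dims k) (fun i => rsum (dims (k - 1)%nat) (fun j => (W k i j) ^ 2))).

Definition pnorm (dims : nat -> nat) (L : nat) (W : params) : R :=
  sqrt (rsum L (fun k' => let k := S k' in
          rsum (dims k) (fun i => rsum (dims (k - 1)%nat) (fun j => (W k i j) ^ 2)))).

Definition inBall (dims : nat -> nat) (L : nat) (Rad : R) (W : params) : Prop :=
  forall k, (1 <= k <= L)%nat -> frob dims W k <= Rad.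

Definition psub (W V : params) : params := fun k i j => W k i j - V k i j.

Definition upd (W : params) (k i j : nat) (t : R) : params :=
  fun k' i' j' =>
    if (Nat.eqb k' k && Nat.eqb i' i && Nat.eqb j' j)%bool then t else W k' i' j'.

Definition is_grad (dims : nat -> nat) (L : nat) (F : params -> R)
  (W g : params) : Prop :=
  forall k i j, (1 <= k <= L)%nat -> (i < dims k)%nat -> (j < dims (k - 1)%nat)%nat ->
    derivable_pt_lim (fun t => F (upd W k i j t)) (W k i j) (g k i j).

(* Main.v *)
Require Import Defs.
From Stdlib Require Import Reals Lra Lia Arith Psatz FunctionalExtensionality.
Open Scope R_scope.

Lemma rsum_ext n f g : (forall i, (i < n)%nat -> f i = g i) -> rsum n f = rsum n g.
Proof. induction n; simpl; intros H; auto. rewrite IHn by (intros; apply H; lia). rewrite H by lia. auto. Qed.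

Lemma rsum_plus n f g : rsum n (fun i => f i + g i) = rsum n f + rsum n g.
Proof. induction n; simpl; [lra|]. rewrite IHn; lra. Qed.

Lemma rsum_minus n f g : rsum n (fun i => f i - g i) = rsum n f - rsum n g.
Proof. induction n; simpl; [lra|]. rewrite IHn; lra. Qed.

Lemma rsum_scal n c f : rsum n (fun i => c * f i) = c * rsum n f.
Proof. induction n; simpl; [lra|]. rewrite IHn; lra. Qed.

Lemma rsum_scalr n c f : rsum n (fun i => f i * c) = rsum n f * c.
Proof. induction n; simpl; [lra|]. rewrite IHn; lra. Qed.

Lemma rsum_zero n : rsum n (fun _ => 0) = 0.
Proof. induction n; simpl; [lra|]. rewrite IHn; lra. Qed.

Lemma rsum_const n c : rsum n (fun _ => c) = INR n * c.
Proof. induction n; simpl rsum; [simpl; lra|]. rewrite IHn, S_INR; lra. Qed.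

Lemma rsum_swap n m (f : nat -> nat -> R) :
  rsum n (fun i => rsum m (fun j => f i j)) = rsum m (fun j => rsum n (fun i => f i j)).
Proof.
  induction n; simpl.
  - rewrite rsum_zero; auto.
  - rewrite IHn, <- rsum_plus. auto.
Qed.

Lemma rsum_le n f g : (forall i, (i < n)%nat -> f i <= g i) -> rsum n f <= rsum n g.
Proof. induction n; simpl; intros H; [lra|]. assert (f n <= g n) by (apply H; lia).
  assert (rsum n f <= rsum n g) by (apply IHn; intros; apply H; lia). lra. Qed.

Lemma rsum_nonneg n f : (forall i, (i < n)%nat -> 0 <= f i) -> 0 <= rsum n f.
Proof. intros H. rewrite <- (rsum_zero n). apply rsum_le; auto. Qed.

Lemma rsum_delta n i g : (i < n)%nat -> rsum n (fun b => if Nat.eqb b i then g b else 0) = g i.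
Proof.
  induction n; simpl; intros H; [lia|].
  destruct (Nat.eqb n i) eqn:E.
  - apply Nat.eqb_eq in E; subst.
    rewrite (rsum_ext _ _ (fun _ => 0)). rewrite rsum_zero; lra.
    intros k Hk. destruct (Nat.eqb k i) eqn:E'; auto. apply Nat.eqb_eq in E'; lia.
  - apply Nat.eqb_neq in E. rewrite IHn by lia. lra.
Qed.

Lemma rsum_ge_term n f k : (forall i, (i < n)%nat -> 0 <= f i) -> (k < n)%nat -> f k <= rsum n f.
Proof.
  induction n; simpl; intros H Hk; [lia|].
  destruct (Nat.eq_dec k n).
  - subst. assert (0 <= rsum n f) by (apply rsum_nonneg; intros; apply H; lia). lra.
  - assert (f k <= rsum n f) by (apply IHn; [intros; apply H; lia| lia]).
    assert (0 <= f n) by (apply H; lia). lra.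
Qed.

Lemma CS2 n x y : (rsum n (fun i => x i * y i))^2 <= rsum n (fun i => x i ^ 2) * rsum n (fun i => y i ^ 2).
Proof.
  induction n; cbn [rsum]; [simpl; lra|].
  set (a := rsum n (fun i => x i * y i)) in *.
  set (b := rsum n (fun i => x i ^ 2)) in *.
  set (c := rsum n (fun i => y i ^ 2)) in *.
  assert (hb : 0 <= b) by (apply rsum_nonneg; intros; nra).
  assert (hc : 0 <= c) by (apply rsum_nonneg; intros; nra).
  set (u := x n) ; set (v := y n).
  assert (2 * a * u * v <= b * v^2 + u^2 * c).
  { assert (h1 : 0 <= b * v^2) by nra. assert (h2 : 0 <= u^2 * c) by nra.
    assert (h3 : (a*u*v)^2 <= (b*v^2) * (u^2*c)).
    { replace ((a*u*v)^2) with (a^2 * (u^2*v^2)) by ring.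
      replace ((b*v^2) * (u^2*c)) with ((b*c) * (u^2*v^2)) by ring.
      apply Rmult_le_compat_r; [nra| exact IHn]. }
    assert (h4 : (2*a*u*v)^2 <= (b * v^2 + u^2 * c)^2).
    { assert (0 <= (b*v^2 - u^2*c)^2) by apply pow2_ge_0. nra. }
    destruct (Rle_or_lt (2*a*u*v) 0); [lra|].
    apply Rsqr_incr_0_var; unfold Rsqr; nra. }
  nra.
Qed.

Definition nrm (n : nat) (x : nat -> R) := sqrt (rsum n (fun i => x i ^ 2)).
Definition mnrm (a b : nat) (M : nat -> nat -> R) :=
  sqrt (rsum a (fun i => rsum b (fun j => M i j ^ 2))).

Lemma sumsq_nonneg n x : 0 <= rsum n (fun i => x i ^ 2).
Proof. apply rsum_nonneg; intros; nra. Qed.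

Lemma nrm_nonneg n x : 0 <= nrm n x.
Proof. apply sqrt_pos. Qed.
Lemma mnrm_nonneg a b M : 0 <= mnrm a b M.
Proof. apply sqrt_pos. Qed.

Lemma nrm_sq n x : nrm n x ^ 2 = rsum n (fun i => x i ^ 2).
Proof. apply pow2_sqrt, sumsq_nonneg. Qed.

Lemma CS n x y : Rabs (rsum n (fun i => x i * y i)) <= nrm n x * nrm n y.
Proof.
  unfold nrm. rewrite <- sqrt_mult by apply sumsq_nonneg.
  rewrite <- sqrt_Rsqr_abs. apply sqrt_le_1_alt.
  pose proof (CS2 n x y). rewrite <- Rsqr_pow2 in H. exact H.
Qed.

Lemma sqrt_le_of_sq a b : 0 <= b -> a <= b^2 -> sqrt a <= b.
Proof. intros hb h. rewrite <- (sqrt_pow2 b hb). apply sqrt_le_1_alt; auto. Qed.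

Lemma nrm_ext n x y : (forall i, (i < n)%nat -> x i = y i) -> nrm n x = nrm n y.
Proof. intros H; unfold nrm; f_equal; apply rsum_ext; intros; rewrite H; auto. Qed.

Lemma mnrm_ext a b M N : (forall i j, (i < a)%nat -> (j < b)%nat -> M i j = N i j) -> mnrm a b M = mnrm a b N.
Proof. intros H; unfold mnrm; f_equal; apply rsum_ext; intros; apply rsum_ext; intros; rewrite H; auto. Qed.

Lemma nrm_triangle n x y : nrm n (fun i => x i + y i) <= nrm n x + nrm n y.
Proof.
  apply sqrt_le_of_sq. pose proof (nrm_nonneg n x); pose proof (nrm_nonneg n y); lra.
  rewrite (rsum_ext _ _ (fun i => x i ^2 + (2 * (x i * y i) + y i ^2))) by (intros; ring).
  rewrite !rsum_plus, rsum_scal.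
  pose proof (CS n x y). pose proof (Rle_abs (rsum n (fun i => x i * y i))).
  rewrite <- !nrm_sq. pose proof (nrm_nonneg n x); pose proof (nrm_nonneg n y). nra.
Qed.

Lemma nrm_scal n c x : nrm n (fun i => c * x i) = Rabs c * nrm n x.
Proof.
  unfold nrm. rewrite (rsum_ext _ _ (fun i => c^2 * x i ^2)) by (intros; ring).
  rewrite rsum_scal, sqrt_mult by (try nra; apply sumsq_nonneg).
  f_equal. rewrite <- sqrt_Rsqr_abs. unfold Rsqr. f_equal. ring.
Qed.

Lemma nrm_mono n x y : (forall i, (i < n)%nat -> Rabs (x i) <= y i) -> nrm n x <= nrm n y.
Proof.
  intros H. unfold nrm. apply sqrt_le_1_alt. apply rsum_le. intros i Hi.
  specialize (H i Hi). pose proof (Rabs_pos (x i)).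
  rewrite <- (pow2_abs (x i)). nra.
Qed.

Lemma nrm_abs_le n x i : (i < n)%nat -> Rabs (x i) <= nrm n x.
Proof.
  intros Hi. unfold nrm. rewrite <- sqrt_Rsqr_abs. apply sqrt_le_1_alt.
  unfold Rsqr. replace (x i * x i) with (x i ^ 2) by ring.
  apply (rsum_ge_term n (fun i => x i ^ 2)); auto. intros; nra.
Qed.

Lemma mnrm_rows a b M : mnrm a b M = nrm a (fun i => nrm b (M i)).
Proof.
  unfold mnrm, nrm. f_equal. apply rsum_ext. intros. rewrite pow2_sqrt; auto. apply (sumsq_nonneg b (M i)).
Qed.

Lemma mnrm_triangle a b M N : mnrm a b (fun i j => M i j + N i j) <= mnrm a b M + mnrm a b N.
Proof.
  rewrite !mnrm_rows. eapply Rle_trans; [|apply nrm_triangle].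
  apply nrm_mono. intros i Hi. rewrite Rabs_right by (apply Rle_ge, nrm_nonneg).
  apply (nrm_triangle b (M i) (N i)).
Qed.

Lemma mnrm_scal a b c M : mnrm a b (fun i j => c * M i j) = Rabs c * mnrm a b M.
Proof.
  rewrite !mnrm_rows. rewrite (nrm_ext _ _ (fun i => Rabs c * nrm b (M i))).
  rewrite nrm_scal, Rabs_Rabsolu; auto.
  intros. apply (nrm_scal b c (M i)).
Qed.

Lemma mnrm_outer a b x y : mnrm a b (fun i j => x i * y j) = nrm a x * nrm b y.
Proof.
  unfold mnrm, nrm. rewrite <- sqrt_mult by apply sumsq_nonneg. f_equal.
  rewrite <- rsum_scalr. apply rsum_ext; intros. rewrite <- rsum_scal. apply rsum_ext; intros. ring.
Qed.

Lemma mnrm_sum a b n (X : nat -> nat -> nat -> R) :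
  mnrm a b (fun i j => rsum n (fun s => X s i j)) <= rsum n (fun s => mnrm a b (X s)).
Proof.
  induction n; simpl.
  - unfold mnrm. rewrite (rsum_ext _ _ (fun _ => 0)). rewrite rsum_zero, sqrt_0; lra.
    intros. rewrite (rsum_ext _ _ (fun _ => 0)). apply rsum_zero. intros; simpl; ring.
  - eapply Rle_trans; [apply (mnrm_triangle a b (fun i j => rsum n (fun s => X s i j)) (X n))|]. lra.
Qed.

Lemma matvec a b M v : nrm a (fun r => rsum b (fun c => M r c * v c)) <= mnrm a b M * nrm b v.
Proof.
  apply sqrt_le_of_sq. apply Rmult_le_pos; [apply mnrm_nonneg|apply nrm_nonneg].
  rewrite Rpow_mult_distr, nrm_sq. unfold mnrm. rewrite pow2_sqrt by (apply rsum_nonneg; intros; apply sumsq_nonneg).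
  rewrite <- rsum_scalr. apply rsum_le. intros. apply CS2.
Qed.

Lemma mnrm_tr a b M : mnrm a b M = mnrm b a (fun j i => M i j).
Proof. unfold mnrm. f_equal. apply rsum_swap. Qed.

Lemma vecmat a b q M : nrm b (fun c => rsum a (fun r => q r * M r c)) <= nrm a q * mnrm a b M.
Proof.
  rewrite mnrm_tr, Rmult_comm.
  rewrite (nrm_ext _ _ (fun c => rsum a (fun r => M r c * q r))). apply matvec.
  intros; apply rsum_ext; intros; ring.
Qed.

Fixpoint fwd (dims : nat -> nat) (W : params) (v : nat -> R) (m : nat) : nat -> R :=
  match m with
  | O => v
  | S m' => fun a => rsum (dims m') (fun b => W (S m') a b * fwd dims W v m' b)
  end.

Fixpoint bwd (dims : nat -> nat) (L : nat) (W : params) (c : nat) : nat -> R :=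
  match c with
  | O => fun b => if Nat.eqb b 0 then 1 else 0
  | S c' => fun b => rsum (dims (L - c')%nat) (fun a => bwd dims L W c' a * W (L - c')%nat a b)
  end.

Definition ztr (d : nat) (zi : nat -> R) : nat -> R := fun a => if Nat.ltb a d then zi a else 0.

Lemma fwd_prod dims d W zi : dims 0%nat = d -> forall m a,
  rsum d (fun j => prodmat dims W m a j * zi j) = fwd dims W (ztr d zi) m a.
Proof.
  intros hd. induction m; intros a.
  - simpl. unfold ztr. destruct (Nat.ltb a d) eqn:E.
    + apply Nat.ltb_lt in E.
      rewrite (rsum_ext _ _ (fun j => if Nat.eqb j a then zi j else 0)).
      apply rsum_delta; auto.
      intros j Hj. rewrite Nat.eqb_sym. destruct (Nat.eqb j a); ring.
    + apply Nat.ltb_ge in E. rewrite (rsum_ext _ _ (fun _ => 0)). apply rsum_zero.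
      intros j Hj. destruct (Nat.eqb a j) eqn:E2; [apply Nat.eqb_eq in E2; lia|ring].
  - simpl. rewrite (rsum_ext _ _ (fun j => rsum (dims m) (fun b => W (S m) a b * (prodmat dims W m b j * zi j)))).
    rewrite rsum_swap. apply rsum_ext. intros b Hb. rewrite rsum_scal, IHm. auto.
    intros j Hj. rewrite <- rsum_scalr. apply rsum_ext. intros; ring.
Qed.

Lemma bwd_id dims L W v : dims L = 1%nat -> forall c, (c <= L)%nat ->
  fwd dims W v L 0%nat = rsum (dims (L - c)%nat) (fun b => bwd dims L W c b * fwd dims W v (L - c)%nat b).
Proof.
  intros hL. induction c; intros hc.
  - rewrite Nat.sub_0_r, hL. simpl. lra.
  - rewrite IHc by lia. cbn [bwd].
    replace (L - c)%nat with (S (L - S c)) by lia. cbn [fwd].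
    rewrite (rsum_ext _ _ (fun a => rsum (dims (L - S c)%nat) (fun b => bwd dims L W c a * W (S (L - S c)) a b * fwd dims W v (L - S c) b))).
    rewrite rsum_swap. apply rsum_ext. intros b Hb. rewrite <- rsum_scalr. auto.
    intros a Ha. rewrite <- rsum_scal. apply rsum_ext. intros; ring.
Qed.

Lemma fwd_ext dims W W' v m : (forall l a b, (1 <= l <= m)%nat -> W l a b = W' l a b) ->
  forall a, fwd dims W v m a = fwd dims W' v m a.
Proof.
  induction m; intros H a; simpl; auto.
  apply rsum_ext. intros b Hb. rewrite H by lia. rewrite IHm; auto. intros; apply H; lia.
Qed.

Lemma bwd_ext dims L W W' c : (c <= L)%nat -> (forall l a b, (L - c < l)%nat -> W l a b = W' l a b) ->
  forall b, bwd dims L W c b = bwd dims L W' c b.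
Proof.
  induction c; intros hc H b; simpl; auto.
  apply rsum_ext. intros a Ha. rewrite IHc by (try lia; intros; apply H; lia). rewrite H by lia. auto.
Qed.

Lemma fwd_upd dims L W v m i j t : dims L = 1%nat -> (S m <= L)%nat -> (i < dims (S m))%nat -> (j < dims m)%nat ->
  fwd dims (upd W (S m) i j t) v L 0%nat =
  fwd dims W v L 0%nat + (t - W (S m) i j) * (bwd dims L W (L - S m) i * fwd dims W v m j).
Proof.
  intros hL hm hi hj.
  rewrite !(bwd_id dims L _ v hL (L - S m)) by lia.
  replace (L - (L - S m))%nat with (S m) by lia. cbn [fwd].
  rewrite (rsum_ext _ _ (fun b => bwd dims L W (L - S m) b * rsum (dims m) (fun b0 => W (S m) b b0 * fwd dims W v m b0)
     + (if Nat.eqb b i then (t - W (S m) i j) * (bwd dims L W (L - S m) i * fwd dims W v m j) else 0))).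
  rewrite rsum_plus, rsum_delta; auto.
  intros b Hb.
  rewrite (bwd_ext dims L (upd W (S m) i j t) W) by (try lia; intros l a c Hl; unfold upd;
     replace (Nat.eqb l (S m)) with false by (symmetry; apply Nat.eqb_neq; lia); auto).
  rewrite (rsum_ext (dims m) _ (fun p => W (S m) b p * fwd dims W v m p +
      (if Nat.eqb b i then (if Nat.eqb p j then (t - W (S m) i j) * fwd dims W v m p else 0) else 0))).
  rewrite rsum_plus, Rmult_plus_distr_l.
  destruct (Nat.eqb b i) eqn:E.
  - apply Nat.eqb_eq in E; subst. rewrite rsum_delta by auto. ring.
  - rewrite rsum_zero. ring.
  - intros p Hp. rewrite (fwd_ext dims (upd W (S m) i j t) W v m) by (intros l a c Hl; unfold upd;
       replace (Nat.eqb l (S m)) with false by (symmetry; apply Nat.eqb_neq; lia); auto).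
    unfold upd. rewrite Nat.eqb_refl. simpl.
    destruct (Nat.eqb b i) eqn:E; destruct (Nat.eqb p j) eqn:E2; simpl; try ring.
    apply Nat.eqb_eq in E; apply Nat.eqb_eq in E2; subst. ring.
Qed.

Lemma deriv_sum n (F : nat -> R -> R) dF x :
  (forall s, (s < n)%nat -> derivable_pt_lim (F s) x (dF s)) ->
  derivable_pt_lim (fun t => rsum n (fun s => F s t)) x (rsum n dF).
Proof.
  induction n; intros H; simpl.
  - apply derivable_pt_lim_const.
  - apply (derivable_pt_lim_plus (fun t => rsum n (fun s => F s t)) (F n)).
    apply IHn; intros; apply H; lia. apply H; lia.
Qed.

Lemma deriv_affine ell ell' A B x : (forall y, derivable_pt_lim ell y (ell' y)) ->
  derivable_pt_lim (fun t => ell (A + (t - x) * B)) x (ell' A * B).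
Proof.
  intros hd.
  assert (h1 : derivable_pt_lim (fun t => A + (t - x) * B) x B).
  { intros eps heps. exists (mkposreal 1 Rlt_0_1). intros h hh _.
    replace ((A + (x + h - x) * B - (A + (x - x) * B)) / h - B) with 0.
    rewrite Rabs_R0; lra. field; auto. }
  pose proof (derivable_pt_lim_comp _ _ _ _ _ h1 (hd (A + (x - x) * B))) as h2.
  replace (A + (x - x) * B) with A in h2 by ring. exact h2.
Qed.

Definition aS dims d L W (zi : nat -> R) := fwd dims W (ztr d zi) L 0%nat.

Lemma grad_formula (ell ell' : R -> R) n d L dims z W g m i j :
  dims 0%nat = d -> dims L = 1%nat ->
  (forall y, derivable_pt_lim ell y (ell' y)) ->
  is_grad dims L (risk ell n d L dims z) W g ->
  (S m <= L)%nat -> (i < dims (S m))%nat -> (j < dims m)%nat ->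
  g (S m) i j = / INR n * rsum n (fun s => ell' (aS dims d L W (z s)) *
        (bwd dims L W (L - S m) i * fwd dims W (ztr d (z s)) m j)).
Proof.
  intros hd hL hder hg hm hi hj.
  assert (hj' : (j < dims (S m - 1))%nat) by (replace (S m - 1)%nat with m by lia; auto).
  specialize (hg (S m) i j ltac:(lia) hi hj').
  set (w0 := W (S m) i j) in *.
  assert (E : (fun t => risk ell n d L dims z (upd W (S m) i j t)) =
     mult_real_fct (/ INR n) (fun t => rsum n (fun s => ell (aS dims d L W (z s) + (t - w0) *
        (bwd dims L W (L - S m) i * fwd dims W (ztr d (z s)) m j))))).
  { apply functional_extensionality. intros t. unfold risk, mult_real_fct. f_equal.
    apply rsum_ext. intros s Hs. f_equal. unfold inner, wprod.
    rewrite fwd_prod by auto. unfold aS. rewrite fwd_upd; auto. }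
  rewrite E in hg. eapply uniqueness_limite; [exact hg|].
  apply derivable_pt_lim_scal. apply deriv_sum. intros s Hs.
  apply deriv_affine; auto.
Qed.

Lemma aS_eq dims d L W zi : dims 0%nat = d -> inner d (wprod dims L W) zi = aS dims d L W zi.
Proof. intros. unfold inner, wprod, aS. apply fwd_prod; auto. Qed.

Lemma frob_mnrm dims X l : (1 <= l)%nat -> frob dims X l = mnrm (dims l) (dims (Nat.pred l)) (X l).
Proof. intros. unfold frob, mnrm. replace (l - 1)%nat with (Nat.pred l) by lia. auto. Qed.

Lemma frob_le_pnorm dims L X l : (1 <= l <= L)%nat -> frob dims X l <= pnorm dims L X.
Proof.
  intros hl. unfold frob, pnorm. apply sqrt_le_1_alt.
  destruct l as [|k]; [lia|].
  apply (rsum_ge_term L (fun k' => let k := S k' in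
          rsum (dims k) (fun i => rsum (dims (k - 1)%nat) (fun j => (X k i j) ^ 2))) k).
  intros; cbv zeta; apply rsum_nonneg; intros; apply sumsq_nonneg. lia.
Qed.

Section Bounds.
Variables (dims : nat -> nat) (L : nat) (Rad : R) (W V : params).
Hypothesis hR : 1 <= Rad.
Hypothesis hW : inBall dims L Rad W.
Hypothesis hV : inBall dims L Rad V.
Let Dn := pnorm dims L (psub W V).

Lemma Dn_nonneg : 0 <= Dn.
Proof. apply sqrt_pos. Qed.

Lemma BF1 (X : params) v : inBall dims L Rad X -> forall m, (m <= L)%nat ->
  nrm (dims m) (fwd dims X v m) <= Rad ^ m * nrm (dims 0%nat) v.
Proof.
  intros hX. induction m; intros hm.
  - simpl; lra.
  - cbn [fwd]. eapply Rle_trans; [apply matvec|].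
    pose proof (hX (S m) ltac:(lia)) as h. rewrite frob_mnrm in h by lia. simpl in h.
    pose proof (IHm ltac:(lia)).
    pose proof (nrm_nonneg (dims m) (fwd dims X v m)).
    pose proof (mnrm_nonneg (dims (S m)) (dims m) (X (S m))).
    simpl. apply Rle_trans with (Rad * (Rad ^ m * nrm (dims 0%nat) v)).
    apply Rmult_le_compat; auto. nra.
Qed.

Lemma BF2 v : forall m, (m <= L)%nat ->
  Rad * nrm (dims m) (fun a => fwd dims W v m a - fwd dims V v m a) <= INR m * Rad ^ m * Dn * nrm (dims 0%nat) v.
Proof.
  induction m; intros hm.
  - simpl. rewrite (nrm_ext _ _ (fun a => 0 * v a)) by (intros; ring).
    rewrite nrm_scal, Rabs_R0. lra.
  - cbn [fwd].
    rewrite (nrm_ext _ _ (fun a => rsum (dims m) (fun b => W (S m) a b * (fwd dims W v m b - fwd dims V v m b))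
        + rsum (dims m) (fun b => psub W V (S m) a b * fwd dims V v m b))).
    2:{ intros; rewrite <- rsum_plus, <- rsum_minus. apply rsum_ext; intros; unfold psub; ring. }
    pose proof (nrm_triangle (dims (S m)) (fun a => rsum (dims m) (fun b => W (S m) a b * (fwd dims W v m b - fwd dims V v m b)))
        (fun a => rsum (dims m) (fun b => psub W V (S m) a b * fwd dims V v m b))) as t.
    pose proof (matvec (dims (S m)) (dims m) (W (S m)) (fun b => fwd dims W v m b - fwd dims V v m b)) as t1.
    pose proof (matvec (dims (S m)) (dims m) (psub W V (S m)) (fwd dims V v m)) as t2.
    pose proof (hW (S m) ltac:(lia)) as h1. rewrite frob_mnrm in h1 by lia. simpl in h1.
    pose proof (frob_le_pnorm dims L (psub W V) (S m) ltac:(lia)) as h2. rewrite frob_mnrm in h2 by lia. simpl in h2.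
    fold Dn in h2.
    pose proof (IHm ltac:(lia)) as ih.
    pose proof (BF1 V v hV m ltac:(lia)) as bv.
    set (nd := nrm (dims m) (fun a => fwd dims W v m a - fwd dims V v m a)) in *.
    set (nv := nrm (dims m) (fwd dims V v m)) in *.
    set (fw := mnrm (dims (S m)) (dims m) (W (S m))) in *.
    set (fd := mnrm (dims (S m)) (dims m) (psub W V (S m))) in *.
    set (n0 := nrm (dims 0%nat) v) in *.
    assert (0 <= nd) by apply nrm_nonneg. assert (0 <= nv) by apply nrm_nonneg.
    assert (0 <= fw) by apply mnrm_nonneg. assert (0 <= fd) by apply mnrm_nonneg.
    assert (0 <= n0) by apply nrm_nonneg. pose proof Dn_nonneg.
    assert (0 <= Rad ^ m) by (apply pow_le; lra).
    assert (hA : Rad * (fw * nd) <= Rad * (INR m * Rad ^ m * Dn * n0)).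
    { apply Rmult_le_compat_l; [lra|]. apply Rle_trans with (Rad * nd); [apply Rmult_le_compat_r; lra|]. lra. }
    assert (hB : fd * nv <= Dn * (Rad ^ m * n0)) by (apply Rmult_le_compat; lra).
    rewrite S_INR. simpl pow.
    assert (hC : Rad * nrm (dims (S m)) (fun a => rsum (dims m) (fun b => W (S m) a b * (fwd dims W v m b - fwd dims V v m b)) +
         rsum (dims m) (fun b => psub W V (S m) a b * fwd dims V v m b)) <= Rad * (fw * nd + fd * nv)).
    { apply Rmult_le_compat_l; lra. }
    assert (Rad * (fd * nv) <= Rad * (Dn * (Rad ^ m * n0))) by (apply Rmult_le_compat_l; lra).
    nra.
Qed.

Lemma BQ1 (X : params) : inBall dims L Rad X -> dims L = 1%nat -> forall c, (c <= L)%nat ->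
  nrm (dims (L - c)%nat) (bwd dims L X c) <= Rad ^ c.
Proof.
  intros hX hL. induction c; intros hc.
  - rewrite Nat.sub_0_r, hL. unfold nrm. simpl. rewrite Rplus_0_l, Rmult_1_l, Rmult_1_l, sqrt_1. lra.
  - cbn [bwd]. eapply Rle_trans.
    { apply (vecmat (dims (L - c)%nat) (dims (L - S c)%nat) (bwd dims L X c) (X (L - c)%nat)). }
    pose proof (hX (L - c)%nat ltac:(lia)) as h. rewrite frob_mnrm in h by lia.
    replace (Nat.pred (L - c)) with (L - S c)%nat in h by lia.
    pose proof (IHc ltac:(lia)).
    pose proof (nrm_nonneg (dims (L - c)%nat) (bwd dims L X c)).
    simpl. apply Rle_trans with (Rad ^ c * Rad). apply Rmult_le_compat; auto. apply mnrm_nonneg. lra.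
Qed.

Lemma BQ2 : dims L = 1%nat -> forall c, (c <= L)%nat ->
  Rad * nrm (dims (L - c)%nat) (fun b => bwd dims L W c b - bwd dims L V c b) <= INR c * Rad ^ c * Dn.
Proof.
  intros hL. induction c; intros hc.
  - simpl. rewrite (nrm_ext _ _ (fun a => 0 * 0)) by (intros; destruct (Nat.eqb i 0); ring).
    rewrite nrm_scal, Rabs_R0. lra.
  - cbn [bwd].
    set (k := (L - c)%nat). set (k' := (L - S c)%nat).
    rewrite (nrm_ext _ _ (fun b => rsum (dims k) (fun a => (bwd dims L W c a - bwd dims L V c a) * W k a b)
        + rsum (dims k) (fun a => bwd dims L V c a * psub W V k a b))).
    2:{ intros; rewrite <- rsum_plus, <- rsum_minus. apply rsum_ext; intros; unfold psub; ring. }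
    pose proof (nrm_triangle (dims k') (fun b => rsum (dims k) (fun a => (bwd dims L W c a - bwd dims L V c a) * W k a b))
        (fun b => rsum (dims k) (fun a => bwd dims L V c a * psub W V k a b))) as t.
    pose proof (vecmat (dims k) (dims k') (fun a => bwd dims L W c a - bwd dims L V c a) (W k)) as t1.
    pose proof (vecmat (dims k) (dims k') (bwd dims L V c) (psub W V k)) as t2.
    pose proof (hW k ltac:(unfold k; lia)) as h1. rewrite frob_mnrm in h1 by (unfold k; lia).
    replace (Nat.pred k) with k' in h1 by (unfold k, k'; lia).
    pose proof (frob_le_pnorm dims L (psub W V) k ltac:(unfold k; lia)) as h2. rewrite frob_mnrm in h2 by (unfold k; lia).
    replace (Nat.pred k) with k' in h2 by (unfold k, k'; lia).
    fold Dn in h2.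
    pose proof (IHc ltac:(lia)) as ih. fold k in ih.
    pose proof (BQ1 V hV hL c ltac:(lia)) as bv. fold k in bv.
    set (nd := nrm (dims k) (fun a => bwd dims L W c a - bwd dims L V c a)) in *.
    set (nv := nrm (dims k) (bwd dims L V c)) in *.
    set (fw := mnrm (dims k) (dims k') (W k)) in *.
    set (fd := mnrm (dims k) (dims k') (psub W V k)) in *.
    assert (0 <= nd) by apply nrm_nonneg. assert (0 <= nv) by apply nrm_nonneg.
    assert (0 <= fw) by apply mnrm_nonneg. assert (0 <= fd) by apply mnrm_nonneg.
    pose proof Dn_nonneg.
    assert (0 <= Rad ^ c) by (apply pow_le; lra).
    assert (hA : Rad * (nd * fw) <= Rad * (INR c * Rad ^ c * Dn)).
    { rewrite (Rmult_comm nd fw), <- Rmult_assoc, (Rmult_comm Rad fw), Rmult_assoc.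
      apply Rle_trans with (Rad * (Rad * nd)); [apply Rmult_le_compat_r; nra|]. nra. }
    assert (hB : nv * fd <= Rad ^ c * Dn) by (apply Rmult_le_compat; lra).
    rewrite S_INR. simpl pow.
    assert (Rad * (nv * fd) <= Rad * (Rad ^ c * Dn)) by (apply Rmult_le_compat_l; lra).
    assert (hC : Rad * nrm (dims k') (fun b => rsum (dims k) (fun a => (bwd dims L W c a - bwd dims L V c a) * W k a b) +
        rsum (dims k) (fun a => bwd dims L V c a * psub W V k a b)) <= Rad * (nd * fw + nv * fd)).
    { apply Rmult_le_compat_l; lra. }
    nra.
Qed.
End Bounds.

Lemma arith (Rad rc rm E beta G Dn nL nc nm qW fW qV dA dQ dF deW eV : R) :
  1 <= Rad -> 0 <= rc -> 0 <= rm -> E = rc * rm -> 1 <= E -> 0 <= beta -> 0 <= G -> 0 <= Dn ->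
  nc + nm <= nL -> 0 <= nc -> 0 <= nm ->
  0 <= qW <= rc -> 0 <= fW <= rm -> 0 <= qV <= rc -> 0 <= dA -> 0 <= dQ -> 0 <= dF ->
  Rad * dA <= nL * (Rad * E) * Dn -> Rad * dQ <= nc * rc * Dn -> Rad * dF <= nm * rm * Dn ->
  0 <= deW <= beta * dA -> 0 <= eV <= G ->
  deW * (qW * fW) + eV * (dQ * fW) + eV * (qV * dF) <= nL * (E * E) * (beta + G) * Dn.
Proof.
  intros. assert (h0 : 0 < Rad) by lra.
  assert (hA : dA <= nL * E * Dn).
  { apply Rmult_le_reg_l with Rad; auto. nra. }
  assert (hQW : qW * fW <= E) by (subst; apply Rmult_le_compat; lra).
  assert (0 <= nL) by lra.
  assert (0 <= nL * E * Dn) by (apply Rmult_le_pos; [apply Rmult_le_pos|]; lra).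
  assert (T1 : deW * (qW * fW) <= beta * (nL * E * Dn) * E).
  { apply Rmult_le_compat; try nra. }
  assert (hq : Rad * (dQ * fW) <= nc * E * Dn).
  { apply Rle_trans with ((Rad * dQ) * rm). rewrite <- Rmult_assoc. apply Rmult_le_compat_l; nra.
    subst. apply Rle_trans with ((nc * rc * Dn) * rm). apply Rmult_le_compat_r; lra. lra. }
  assert (hf : Rad * (qV * dF) <= nm * E * Dn).
  { apply Rle_trans with (rc * (Rad * dF)). replace (Rad * (qV * dF)) with (qV * (Rad * dF)) by ring.
    apply Rmult_le_compat_r; nra.
    subst. apply Rle_trans with (rc * (nm * rm * Dn)). apply Rmult_le_compat_l; lra. lra. }
  assert (hs : Rad * (dQ * fW + qV * dF) <= nL * E * Dn).
  { apply Rle_trans with ((nc + nm) * E * Dn). nra.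
    apply Rmult_le_compat_r; auto. apply Rmult_le_compat_r; lra. }
  assert (hs2 : dQ * fW + qV * dF <= nL * E * Dn * E).
  { apply Rmult_le_reg_l with Rad; auto. apply Rle_trans with (nL * E * Dn); auto.
    assert (1 <= Rad * E) by nra. nra. }
  assert (0 <= dQ * fW + qV * dF) by nra.
  assert (T2 : eV * (dQ * fW + qV * dF) <= G * (nL * E * Dn * E)) by (apply Rmult_le_compat; lra).
  nra.
Qed.

Theorem mainTheorem8
  (ell ell' : R -> R) (beta G : R)
  (n d L : nat) (dims : nat -> nat) (z : nat -> nat -> R) (Rad : R)
  (hL : (1 <= L)%nat) (hd0 : dims 0%nat = d) (hdL : dims L = 1%nat)
  (hz : forall i, (i < n)%nat -> sqrt (rsum d (fun j => (z i j) ^ 2)) <= 1)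
  (hderiv : forall x, derivable_pt_lim ell x (ell' x))
  (hlip : forall x y, Rabs (ell' x - ell' y) <= beta * Rabs (x - y))
  (hbnd : forall x, Rabs (ell' x) <= G)
  (hR : 1 <= Rad) :
  forall (W V gW gV : params),
    inBall dims L Rad W -> inBall dims L Rad V ->
    is_grad dims L (risk ell n d L dims z) W gW ->
    is_grad dims L (risk ell n d L dims z) V gV ->
    pnorm dims L (psub gW gV)
      <= 2 * (INR L) ^ 2 * Rad ^ (2 * L - 2) * (beta + G) * pnorm dims L (psub W V).
Proof.
  intros W V gW gV hW hV hgW hgV.
  assert (hb : 0 <= beta).
  { pose proof (hlip 1 0). pose proof (Rabs_pos (ell' 1 - ell' 0)).
    replace (1 - 0) with 1 in H by ring. rewrite Rabs_R1 in H. lra. }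
  assert (hG : 0 <= G) by (pose proof (hbnd 0); pose proof (Rabs_pos (ell' 0)); lra).
  set (Dn := pnorm dims L (psub W V)).
  assert (hD : 0 <= Dn) by apply sqrt_pos.
  set (E := Rad ^ (L - 1)).
  assert (hE : 1 <= E) by (unfold E; rewrite <- (pow1 (L-1)); apply pow_incr; lra).
  set (Cst := INR L * (E * E) * (beta + G) * Dn).
  assert (hC : 0 <= Cst).
  { unfold Cst. apply Rmult_le_pos; auto. apply Rmult_le_pos; [|lra]. apply Rmult_le_pos; [apply pos_INR|nra]. }
  assert (layer : forall m, (S m <= L)%nat -> frob dims (psub gW gV) (S m) <= Cst).
  { intros m hm. rewrite frob_mnrm by lia. simpl Nat.pred.
    set (c := (L - S m)%nat).
    set (eW := fun s => ell' (aS dims d L W (z s))).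
    set (eV := fun s => ell' (aS dims d L V (z s))).
    set (qW := bwd dims L W c). set (qV := bwd dims L V c).
    set (fW := fun s => fwd dims W (ztr d (z s)) m). set (fV := fun s => fwd dims V (ztr d (z s)) m).
    rewrite (mnrm_ext _ _ _ (fun i j => / INR n * rsum n (fun s =>
        (eW s - eV s) * (qW i * fW s j) + (eV s * ((qW i - qV i) * fW s j) + eV s * (qV i * (fW s j - fV s j)))))).
    2:{ intros i j hi hj. unfold psub.
        rewrite (grad_formula ell ell' n d L dims z W gW m i j), (grad_formula ell ell' n d L dims z V gV m i j); auto.
        rewrite <- Rmult_minus_distr_l, <- rsum_minus. f_equal. apply rsum_ext. intros.
        unfold eW, eV, qW, qV, fW, fV, c. ring. }
    rewrite mnrm_scal.
    eapply Rle_trans. { apply Rmult_le_compat_l. apply Rabs_pos. apply mnrm_sum. }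
    apply Rle_trans with (Rabs (/ INR n) * rsum n (fun _ => Cst)).
    { apply Rmult_le_compat_l. apply Rabs_pos. apply rsum_le. intros s hs.
      eapply Rle_trans; [apply mnrm_triangle|].
      eapply Rle_trans; [apply Rplus_le_compat_l; apply mnrm_triangle|].
      rewrite !mnrm_scal.
      rewrite (mnrm_outer _ _ qW (fW s)).
      rewrite (mnrm_outer _ _ (fun i => qW i - qV i) (fW s)).
      rewrite (mnrm_outer _ _ qV (fun j => fW s j - fV s j)).
      assert (hcL : (c <= L)%nat) by (unfold c; lia).
      assert (hLc : (L - c)%nat = S m) by (unfold c; lia).
      assert (n0 : nrm (dims 0%nat) (ztr d (z s)) <= 1).
      { rewrite hd0. unfold nrm. rewrite (rsum_ext _ _ (fun j => z s j ^ 2)). apply hz; auto.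
        intros j hj. unfold ztr. replace (Nat.ltb j d) with true by (symmetry; apply Nat.ltb_lt; auto). auto. }
      pose proof (nrm_nonneg (dims 0%nat) (ztr d (z s))) as n0p.
      pose proof (BQ1 dims L Rad W hW hdL c hcL) as bqW. rewrite hLc in bqW.
      pose proof (BQ1 dims L Rad V hV hdL c hcL) as bqV. rewrite hLc in bqV.
      pose proof (BQ2 dims L Rad W V hR hW hV hdL c hcL) as dq. rewrite hLc in dq.
      pose proof (BF1 dims L Rad W (ztr d (z s)) hW m ltac:(lia)) as bfW.
      pose proof (BF2 dims L Rad W V hR hW hV (ztr d (z s)) m ltac:(lia)) as df.
      pose proof (BF2 dims L Rad W V hR hW hV (ztr d (z s)) L ltac:(lia)) as da.
      fold Dn in dq, df, da.
      set (dA := Rabs (aS dims d L W (z s) - aS dims d L V (z s))).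
      assert (hdA : dA <= nrm (dims L) (fun a => fwd dims W (ztr d (z s)) L a - fwd dims V (ztr d (z s)) L a)).
      { unfold dA, aS. apply (nrm_abs_le _ (fun a => fwd dims W (ztr d (z s)) L a - fwd dims V (ztr d (z s)) L a)). lia. }
      assert (hrm : 0 <= Rad ^ m) by (apply pow_le; lra).
      assert (hrc : 0 <= Rad ^ c) by (apply pow_le; lra).
      assert (hEe : E = Rad ^ c * Rad ^ m) by (unfold E; rewrite <- pow_add; f_equal; unfold c; lia).
      assert (hRL : Rad ^ L = Rad * E) by (unfold E; replace L with (S (L - 1)) at 1 by lia; auto).
      assert (hcm : INR c + INR m <= INR L) by (rewrite <- plus_INR; apply le_INR; unfold c; lia).
      rewrite <- Rplus_assoc. unfold Cst.
      apply (arith Rad (Rad ^ c) (Rad ^ m) E beta G Dn (INR L) (INR c) (INR m)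
        (nrm (dims (S m)) qW) (nrm (dims m) (fW s)) (nrm (dims (S m)) qV) dA
        (nrm (dims (S m)) (fun i => qW i - qV i)) (nrm (dims m) (fun j => fW s j - fV s j))
        (Rabs (eW s - eV s)) (Rabs (eV s))); auto; try apply pos_INR; try (split; try apply nrm_nonneg; try apply Rabs_pos); try apply nrm_nonneg; try apply Rabs_pos.
      - exact bqW.
      - eapply Rle_trans; [exact bfW|]. apply Rle_trans with (Rad ^ m * 1); [|lra]. apply Rmult_le_compat_l; auto.
      - exact bqV.
      - apply Rle_trans with (Rad * nrm (dims L) (fun a => fwd dims W (ztr d (z s)) L a - fwd dims V (ztr d (z s)) L a)).
        apply Rmult_le_compat_l; lra. rewrite <- hRL. eapply Rle_trans; [apply da|].
        apply Rle_trans with (INR L * Rad ^ L * Dn * 1); [|lra].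
        apply Rmult_le_compat_l; auto. apply Rmult_le_pos; [apply Rmult_le_pos; [apply pos_INR|apply pow_le; lra]|auto].
      - eapply Rle_trans; [apply df|].
        apply Rle_trans with (INR m * Rad ^ m * Dn * 1); [|lra].
        apply Rmult_le_compat_l; auto. apply Rmult_le_pos; [apply Rmult_le_pos; [apply pos_INR|auto]|auto].
      - unfold eW, eV, dA. apply hlip.
      - apply hbnd. }
    rewrite rsum_const. destruct n as [|n'].
    - simpl. rewrite Rinv_0, Rabs_R0. lra.
    - rewrite Rabs_right by (apply Rle_ge, Rlt_le, Rinv_0_lt_compat, lt_0_INR; lia).
      rewrite <- Rmult_assoc, Rinv_l by (apply not_0_INR; lia). lra. }
  unfold pnorm.
  apply Rle_trans with (sqrt (INR L * (Cst * Cst))).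
  { apply sqrt_le_1_alt. rewrite <- rsum_const. apply rsum_le. intros k hk. cbv zeta.
    pose proof (layer k ltac:(lia)) as hl. pose proof (sqrt_pos (rsum (dims (S k))
      (fun i => rsum (dims (S k - 1)%nat) (fun j => psub gW gV (S k) i j ^ 2)))).
    unfold frob in hl.
    rewrite <- (sqrt_sqrt (rsum (dims (S k)) (fun i => rsum (dims (S k - 1)%nat) (fun j => psub gW gV (S k) i j ^ 2)))).
    apply Rmult_le_compat; lra. apply rsum_nonneg; intros; apply sumsq_nonneg. }
  assert (hL1 : 1 <= INR L) by (apply (le_INR 1); auto).
  rewrite sqrt_mult, sqrt_square by nra.
  assert (sqrt (INR L) <= INR L).
  { rewrite <- (sqrt_square (INR L)) at 2 by lra. apply sqrt_le_1_alt. nra. }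
  assert (hpow : Rad ^ (2 * L - 2) = E * E) by (unfold E; rewrite <- pow_add; f_equal; lia).
  rewrite hpow. fold Dn.
  apply Rle_trans with (INR L * Cst). apply Rmult_le_compat_r; auto.
  unfold Cst. assert (0 <= (E * E) * (beta + G) * Dn) by (apply Rmult_le_pos; [apply Rmult_le_pos|]; nra).
  nra.
Qed.
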